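(* Let $q=2^m$ with $m$ a positive integer, let $b\in\mathbb{F}_q^*$ and $\delta\in\mathbb{F}_{q^2}\setminus\mathbb{F}_q$. Put $$A=b\,\mathrm{Tr}_{q^2/q}(\delta)^2,\quad B=b\delta^{6q}+b\delta^6,\quad C=\mathrm{Tr}_{q^2/q}(\delta)^2,\quad D=A^{-1},$$ and define $S_{-1}=0$, $S_0=1$, $S_i=C^{2^{i-1}}S_{i-1}+D^{2^{i-1}}S_{i-2}$ for $i\geq1$. If the polynomial $$P(x)=b(x^q+x+\delta)^{6}+x$$ permutes $\mathbb{F}_{q^2}$, then its compositional inverse over $\mathbb{F}_{q^2}$ is $$P^{-1}(x)=x+b\left(\delta+\sum_{i=0}^{m-1}\left(D^{2^i}S_{m-2-i}^{2^{i+1}}+D^{1-2^{i}}S_i\right)\left(x^q+x+B\right)^{2^i}\right)^{6}.$$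
   Context: $\mathrm{Tr}_{q^2/q}(y)=y+y^q$. The compositional inverse of a permutation polynomial $f$ of $\mathbb{F}_{Q}$ is the unique polynomial $f^{-1}$ (modulo $x^Q-x$) with $f(f^{-1}(c))=f^{-1}(f(c))=c$ for all $c\in\mathbb{F}_Q$. *)

(* Defs.v *)
From HB Require Import structures.
From mathcomp Require Import all_boot all_order all_algebra all_field.
Set Implicit Arguments. Unset Strict Implicit. Unset Printing Implicit Defensive.
Import GRing.Theory.
Local Open Scope ring_scope.

Definition trq (F : fieldType) (q : nat) (y : F) : F := y + y ^+ q.

(* Sseq C D n = (S_{n-1}, S_n) where S_{-1} = 0, S_0 = 1,
   S_i = C^(2^(i-1)) S_{i-1} + D^(2^(i-1)) S_{i-2}  (i >= 1). *)
Fixpoint Sseq (F : fieldType) (C D : F) (n : nat) : F * F :=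
  match n with
  | 0 => (0, 1)
  | k.+1 => let: (a, c) := Sseq C D k in
            (c, C ^+ (2 ^ k) * c + D ^+ (2 ^ k) * a)
  end.

Definition S_ (F : fieldType) (C D : F) (n : nat) : F := (Sseq C D n).2.
Definition Sprev (F : fieldType) (C D : F) (n : nat) : F := (Sseq C D n).1.

(* Main.v *)
Require Import Defs.
From HB Require Import structures.
From mathcomp Require Import all_boot all_order all_algebra all_field.
From mathcomp Require Import ring zify.
Import GRing.Theory.
Local Open Scope ring_scope.


Section Char2.
Variable F : fieldType.
Hypothesis ch2 : 2%N \in [pchar F].

Lemma two0 : 2 = 0 :> F.
Proof. by have /andP[_ /eqP] := ch2. Qed.

Lemma opp2 (x : F) : - x = x.
Proof. exact: oppr_pchar2. Qed.

Lemma add2 (x : F) : x + x = 0.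
Proof. exact: addrr_pchar2. Qed.

Lemma frob2 (x y : F) : (x + y) ^+ 2 = x ^+ 2 + y ^+ 2.
Proof. by have H := two0; ring: H. Qed.

Lemma frobD k (x y : F) : (x + y) ^+ (2 ^ k) = x ^+ (2 ^ k) + y ^+ (2 ^ k).
Proof.
elim: k => [|k IH]; first by rewrite !expn0 !expr1.
by rewrite expnSr !exprM IH frob2.
Qed.

Lemma frob_sum k (I : Type) (r : seq I) (P : pred I) (f : I -> F) :
  (\sum_(i <- r | P i) f i) ^+ (2 ^ k) = \sum_(i <- r | P i) f i ^+ (2 ^ k).
Proof.
apply: (big_morph (fun x => x ^+ (2 ^ k))).
  by move=> x y; rewrite frobD.
by rewrite expr0n expn_eq0.
Qed.

Variables C D : F.
Local Notation s := (S_ C D).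
Local Notation p := (Sprev C D).

Lemma s0 : s 0 = 1. Proof. by []. Qed.
Lemma p0 : p 0 = 0. Proof. by []. Qed.
Lemma pS k : p k.+1 = s k.
Proof. by rewrite /Sprev /S_ /=; case: (Sseq C D k). Qed.
Lemma sS k : s k.+1 = C ^+ (2 ^ k) * s k + D ^+ (2 ^ k) * p k.
Proof. by rewrite /Sprev /S_ /=; case: (Sseq C D k). Qed.

Lemma R2 k : s k.+1 = C * s k ^+ 2 + D ^+ 2 * p k ^+ 4.
Proof.
suff: s k.+1 = C * s k ^+ 2 + D ^+ 2 * p k ^+ 4 /\
      s k.+2 = C * s k.+1 ^+ 2 + D ^+ 2 * p k.+1 ^+ 4 by case.
elim: k => [|k [IH1 IH2]].
  rewrite /S_ /Sprev /= !expr1 expn1; split; ring.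
split=> //.
rewrite [s k.+3]sS !pS.
have Ea : s k.+1 ^+ 4 = C ^+ (2 ^ k.+2) * s k ^+ 4 + D ^+ (2 ^ k.+2) * p k ^+ 4.
  rewrite sS -[4%N]/(2 ^ 2)%N frobD !exprMn -!exprM -!expnD addn2.
  by [].
have Eb : s k.+2 ^+ 2 = C ^+ (2 ^ k.+2) * s k.+1 ^+ 2 + D ^+ (2 ^ k.+2) * s k ^+ 2.
  by rewrite sS pS frob2 !exprMn -!exprM -expnSr.
rewrite Eb Ea IH2 IH1 pS; ring.
Qed.

Definition Phi (g : nat -> F) (z : F) i :=
  D * g i.+1 * z ^+ (2 ^ i) - g i ^+ 4 * z ^+ (2 ^ i.+1).
Definition eps (g : nat -> F) i := g i ^+ 4 + C * g i.+1 ^+ 2 + D * g i.+2.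

Lemma telescope (g : nat -> F) (z : F) n :
  \sum_(i < n) (g i.+1 ^+ 4 * z ^+ (2 ^ i.+2) + C * g i.+1 ^+ 2 * z ^+ (2 ^ i.+1)
                 + D * g i.+1 * z ^+ (2 ^ i))
  = Phi g z 0 - Phi g z n + \sum_(i < n) eps g i * z ^+ (2 ^ i.+1).
Proof.
elim: n => [|n IH]; first by rewrite !big_ord0 subrr addr0.
rewrite !big_ord_recr /= IH /Phi /eps; ring.
Qed.

Definition fl (u : F) := u ^+ 4 + C * u ^+ 2 + D * u.

Lemma flD u v : fl (u + v) = fl u + fl v.
Proof.
rewrite /fl -[4%N]/(2 ^ 2)%N frobD frob2; ring.
Qed.

Lemma fl_sum (g : nat -> F) (z : F) n :
  fl (\sum_(i < n) g i.+1 * z ^+ (2 ^ i))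
  = Phi g z 0 - Phi g z n + \sum_(i < n) eps g i * z ^+ (2 ^ i.+1).
Proof.
rewrite -telescope /fl -[4%N]/(2 ^ 2)%N !frob_sum -[2%N]/(2 ^ 1)%N frob_sum.
rewrite mulr_sumr mulr_sumr -!big_split /=; apply: eq_bigr => i _.
rewrite !exprMn -!exprM -!expnD !addn2 addn1 expn1; ring.
Qed.

Lemma exp2S (x : F) j : x ^+ (2 ^ j.+1) = (x ^+ (2 ^ j)) ^+ 2.
Proof. by rewrite expnSr exprM. Qed.
Lemma exp2SS (x : F) j : x ^+ (2 ^ j.+2) = (x ^+ (2 ^ j)) ^+ 4.
Proof. by rewrite !exp2S -exprM. Qed.
Lemma e0 j : (0 : F) ^+ (2 ^ j) = 0.
Proof. by rewrite expr0n expn_eq0. Qed.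

Lemma eq_add2 (x y : F) : x = y -> x + y = 0.
Proof. by move=> ->; rewrite add2. Qed.
Lemma char2_by (x y e : F) : x - y = 2 * e -> x = y.
Proof. by rewrite two0 mul0r => /eqP; rewrite subr_eq0 => /eqP. Qed.
Lemma eq_add3 (x y z : F) : x = y + z -> x + y + z = 0.
Proof. by move=> ->; have H := two0; ring: H. Qed.

Variable m : nat.
Hypothesis hm : (2 <= m)%N.
Hypothesis hC : C ^+ (2 ^ m) = C.
Hypothesis hD : D ^+ (2 ^ m) = D.
Hypothesis D0 : D != 0.

Definition gY i := if i is j.+1 then D * D ^- (2 ^ j) * s j else 0.
Definition gX i := if i is j.+1 then D ^+ (2 ^ j) * p (m.-1 - j) ^+ (2 ^ j.+1)
                   else D ^+ (2 ^ m.-1) * s m.-1.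

Lemma s1 : s 1 = C.
Proof. by rewrite sS s0 p0 !expn0 !expr1 mulr1 mulr0 addr0. Qed.

Lemma epsY i : eps gY i = 0.
Proof.
rewrite /eps; case: i => [|j] /=.
  rewrite expr0n /= add0r; apply: eq_add2.
  rewrite s1 s0 !expn0 expn1 !expr1; field; exact: D0.
apply: eq_add2.
rewrite (R2 j.+1) pS !exp2S.
have d0 : D ^+ (2 ^ j) != 0 by rewrite expf_neq0.
field; by rewrite ?expf_neq0.
Qed.
Lemma sS_pow k j : s k.+1 ^+ (2 ^ j) =
  C ^+ (2 ^ (k + j)) * s k ^+ (2 ^ j) + D ^+ (2 ^ (k + j)) * p k ^+ (2 ^ j).
Proof. by rewrite sS frobD !exprMn -!exprM -!expnD. Qed.

Lemma epsX0 : eps gX 0 = 0.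
Proof.
have [n hn] : exists n, m = n.+2 by exists (m - 2)%N; lia.
have hC' := hC; have hD' := hD; rewrite hn in hC' hD'.
rewrite /eps /gX hn /= subn0 subn1 /= pS.
apply: eq_add3.
rewrite exprMn (_ : s n.+1 ^+ 4 = s n.+1 ^+ (2 ^ 2)) // sS_pow addn2 hC' hD'.
rewrite -exp2SS exp2S hD'.
rewrite !expn0 !expn1 !expr1; ring.
Qed.

Lemma epsXm i : (0 < i)%N -> (i < m.-1)%N -> eps gX i = 0.
Proof.
case: i => [|j] // _ hj.
have [k hk] : exists k, m = (k + j + 3)%N by exists (m - j - 3)%N; lia.
rewrite /eps /gX.
rewrite (_ : (m.-1 - j = k.+2)%N); last by lia.
rewrite (_ : (m.-1 - j.+1 = k.+1)%N); last by lia.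
rewrite (_ : (m.-1 - j.+2 = k)%N); last by lia.
rewrite !pS; apply: eq_add3.
rewrite !exprMn -!exp2SS -!exp2S sS_pow (_ : (k + j.+3 = m)%N); last by lia.
rewrite hC hD; ring.
Qed.

Lemma epsXl : eps gX m.-1 = D.
Proof.
have [n hn] : exists n, m = n.+2 by exists (m - 2)%N; lia.
rewrite /eps /gX hn /=.
rewrite (_ : (n.+1 - n = 1)%N); last by lia.
rewrite subnn (_ : (n.+1 - n.+2 = 0)%N); last by lia.
rewrite pS s0 p0 !e0 expr1n mulr1 !mulr0 !expr0n /= !addr0.
by rewrite mulr0 addr0 -exp2SS -hn hD.
Qed.

Lemma PhiY0 z : Phi gY z 0 = D * z.
Proof.
rewrite /Phi /gY /= s0 expr0n /= mul0r subr0 !expn0 !expr1; field; exact: D0.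
Qed.

Lemma PhiYm z : z ^+ (2 ^ m) = z ->
  Phi gY z m = D * s m * z - D ^+ 2 * s m.-1 ^+ 4 * z ^+ 2.
Proof.
move=> hz.
have [n hn] : exists n, m = n.+1 by exists (m - 1)%N; lia.
rewrite /Phi {1 2}hn /= -hn exp2S hz hD.
rewrite hn /= !exprMn -exprVn -exp2SS -hn.
rewrite exp2S exprVn hD; field; exact: D0.
Qed.

Lemma PhiX0 z : Phi gX z 0 = D * (D * p m.-1 ^+ 2) * z - D ^+ 2 * s m.-1 ^+ 4 * z ^+ 2.
Proof.
have [n hn] : exists n, m = n.+2 by exists (m - 2)%N; lia.
rewrite /Phi /gX /= subn0 exprMn -exp2SS hn /= (exp2S D n.+2) -hn hD.
rewrite !expn0 !expn1 !expr1; ring.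
Qed.

Lemma PhiXm z : Phi gX z m = 0.
Proof.
have [n hn] : exists n, m = n.+1 by exists (m - 1)%N; lia.
rewrite /Phi /gX hn /= subnn.
rewrite (_ : (n - n.+1 = 0)%N); last by lia.
by rewrite p0 !e0 !mulr0 mul0r expr0n /= mul0r subrr.
Qed.
Definition Nn := s m + D * p m.-1 ^+ 2.

Lemma main_id z : z ^+ (2 ^ m) = z ->
  fl (\sum_(i < m) (D ^+ (2 ^ i) * p (m.-1 - i) ^+ (2 ^ i.+1)
                    + D * D ^- (2 ^ i) * s i) * z ^+ (2 ^ i))
  = D * Nn * z.
Proof.
move=> hz.
rewrite (eq_bigr (fun i : 'I_m => gX i.+1 * z ^+ (2 ^ i) + gY i.+1 * z ^+ (2 ^ i)));
  last by move=> i _; rewrite mulrDl.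
rewrite big_split flD !fl_sum PhiX0 PhiXm PhiY0 PhiYm //.
have EY : \sum_(i < m) eps gY i * z ^+ (2 ^ i.+1) = 0.
  by apply: big1 => i _; rewrite epsY mul0r.
have EX : \sum_(i < m) eps gX i * z ^+ (2 ^ i.+1) = D * z.
  have [n hn] : exists n, m = n.+1 by exists (m - 1)%N; lia.
  have El := epsXl; rewrite hn /= in El.
  rewrite hn big_ord_recr /= El -hn hz big1 ?add0r // => i _.
  have hi := ltn_ord i.
  case: (posnP i) => [->|ip]; first by rewrite epsX0 mul0r.
  by rewrite epsXm ?mul0r // hn.
rewrite EX EY /Nn; apply: (char2_by _ _ (D * z - D * s m * z)); ring.
Qed.
Lemma Nn_sq : Nn ^+ 2 = Nn.
Proof.
have [n hn] : exists n, m = n.+1 by exists (m - 1)%N; lia.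
rewrite /Nn hn /= frob2 exprMn -exprM.
rewrite (sS_pow n 1) (R2 n) addn1 -hn hC hD expn1; ring.
Qed.

Lemma Nn01 : Nn = 0 \/ Nn = 1.
Proof.
have : Nn * (Nn - 1) = 0 by rewrite mulrBr mulr1 -expr2 Nn_sq subrr.
by move/eqP; rewrite mulf_eq0 subr_eq0 => /orP[]/eqP; auto.
Qed.
End Char2.

Lemma six (F : fieldType) (ch2 : 2%N \in [pchar F]) (x y : F) :
  (x + y) ^+ 6 = (x ^+ 4 + y ^+ 4) * (x ^+ 2 + y ^+ 2).
Proof.
by rewrite -[6%N]/(2 ^ 2 + 2 ^ 1)%N exprD !frobD.
Qed.

Section FF.
Variables (F : finFieldType) (m : nat) (b dl : F).
Hypothesis m0 : (0 < m)%N.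
Hypothesis cardF : #|F| = ((2 ^ m) ^ 2)%N.
Hypothesis bq : b ^+ (2 ^ m) = b.
Hypothesis b0 : b != 0.
Hypothesis dq : dl ^+ (2 ^ m) != dl.

Lemma ch2F : 2%N \in [pchar F].
Proof. by apply: (card_finPcharP (n := (m * 2)%N)); rewrite // cardF expnM. Qed.
Let ch := ch2F.

Local Notation q := (2 ^ m)%N.
Definition inK (x : F) := x ^+ q = x.

Lemma xqq (x : F) : (x ^+ q) ^+ q = x.
Proof. by rewrite -exprM mulnn -cardF expf_card. Qed.

Lemma KD (x y : F) : inK x -> inK y -> inK (x + y).
Proof. by rewrite /inK frobD // => -> ->. Qed.
Lemma KM (x y : F) : inK x -> inK y -> inK (x * y).
Proof. by rewrite /inK exprMn => -> ->. Qed.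
Lemma KX (x : F) n : inK x -> inK (x ^+ n).
Proof. by rewrite /inK exprAC => ->. Qed.
Lemma KV (x : F) : inK x -> inK x^-1.
Proof. by rewrite /inK exprVn => ->. Qed.
Lemma K1 : inK 1.
Proof. by rewrite /inK expr1n. Qed.
Lemma K0 : inK 0.
Proof. by rewrite /inK expr0n expn_eq0. Qed.
Lemma KT (x : F) : inK (x ^+ q + x).
Proof. by rewrite /inK frobD // xqq addrC. Qed.
Lemma Ksum n (e : 'I_n -> F) : (forall i, inK (e i)) -> inK (\sum_(i < n) e i).
Proof. move=> he; apply: (big_ind inK K0 KD) => i _; exact: he. Qed.

Definition t := dl + dl ^+ q.
Definition Cc := t ^+ 2.
Definition Aa := b * t ^+ 2.
Definition Dd := Aa^-1.
Definition Bb := b * dl ^+ (6 * q) + b * dl ^+ 6.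
Definition th := dl / t.

Lemma tK : inK t.
Proof. by rewrite /inK /t frobD // xqq addrC. Qed.
Lemma t0 : t != 0.
Proof.
apply/negP => /eqP h; move: dq; rewrite eq_sym.
have : dl == - dl ^+ q by rewrite -addr_eq0 -/t h.
by rewrite opp2 // => ->.
Qed.
Lemma CK : inK Cc. Proof. exact: KX tK. Qed.
Lemma AK : inK Aa. Proof. apply: KM; [exact: bq | exact: CK]. Qed.
Lemma DK : inK Dd. Proof. exact: KV AK. Qed.
Lemma A0 : Aa != 0. Proof. by rewrite mulf_neq0 // expf_neq0 // t0. Qed.
Lemma D0 : Dd != 0. Proof. by rewrite invr_eq0 A0. Qed.

Lemma Tth : th ^+ q + th = 1.
Proof.
rewrite /th exprMn exprVn tK -mulrDl addrC -/t divff //; exact: t0.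
Qed.

Lemma TB (u : F) : inK u ->
  (b * (u + dl) ^+ 6) ^+ q + b * (u + dl) ^+ 6 = Aa * u ^+ 4 + Aa * Cc * u ^+ 2 + Bb.
Proof.
move=> hu.
rewrite exprMn bq exprAC frobD // hu /Bb mulnC exprM /Aa /Cc /t !six // !frob2 //.
apply: (char2_by _ ch _ _ (b * u ^+ 6 - b * dl ^+ 2 * (dl ^+ q) ^+ 2 * u ^+ 2)); ring.
Qed.

Definition Lfun (u : F) := Aa * u ^+ 4 + Aa * Cc * u ^+ 2 + u.

Lemma Lfl u : Lfun u = Aa * fl _ Cc Dd u.
Proof. rewrite /Lfun /fl /Dd; field; exact: A0. Qed.

Lemma LK u : inK u -> inK (Lfun u).
Proof.
move=> hu; rewrite /Lfun; apply: KD => //; apply: KD; apply: KM.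
- exact: AK.
- exact: KX.
- apply: KM; [exact: AK | exact: CK].
- exact: KX.
Qed.

Lemma char2_by2 (x y e h1 h2 : F) : h1 = h2 -> x - y = 2 * e + (h1 - h2) -> x = y.
Proof. by move=> -> ; rewrite subrr addr0; apply: char2_by. Qed.

Hypothesis Pinj : injective (fun x : F => b * (x ^+ q + x + dl) ^+ 6 + x).

Lemma Linj u1 u2 : inK u1 -> inK u2 -> Lfun u1 = Lfun u2 -> u1 = u2.
Proof.
move=> h1 h2 hL.
pose x1 := u1 * th.
have T1 : x1 ^+ q + x1 = u1 by rewrite /x1 exprMn h1 -mulrDr Tth mulr1.
pose y1 := b * (u1 + dl) ^+ 6; pose y2 := b * (u2 + dl) ^+ 6.
pose x2 := x1 + y1 + y2.
have T2 : x2 ^+ q + x2 = u2.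
  rewrite /x2 !frobD //.
  have -> : x1 ^+ q + y1 ^+ q + y2 ^+ q + (x1 + y1 + y2)
          = (x1 ^+ q + x1) + (y1 ^+ q + y1) + (y2 ^+ q + y2) by ring.
  rewrite T1 /y1 /y2 (TB u1 h1) (TB u2 h2).
  apply: (char2_by2 _ _ (Aa * u2 ^+ 4 + Aa * Cc * u2 ^+ 2 + Bb) _ _ hL).
  rewrite /Lfun; ring.
have Px : (fun x : F => b * (x ^+ q + x + dl) ^+ 6 + x) x2
        = (fun x : F => b * (x ^+ q + x + dl) ^+ 6 + x) x1.
  rewrite /= T1 T2 /x2 -/y1 -/y2.
  apply: (char2_by _ ch _ _ y2); ring.
by rewrite -T1 -T2 (Pinj _ _ Px).
Qed.

Lemma fl_inj0 u : inK u -> fl _ Cc Dd u = 0 -> u = 0.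
Proof.
move=> hu h; apply: Linj => //; first exact: K0.
rewrite !Lfl h /fl; ring.
Qed.

Definition KS := [set x : F | x ^+ q == x].

Lemma Kcard : (q <= #|KS|)%N.
Proof.
pose g (x : F) := (x ^+ q + x, x + (x ^+ q + x) * th).
have ginj : injective g.
  move=> x y [e1 e2]; rewrite e1 in e2; exact: (addIr _ e2).
have sub : g @: setT \subset setX KS KS.
  apply/subsetP => _ /imsetP[x _ ->]; rewrite !inE /=.
  apply/andP; split; apply/eqP; first exact: KT.
  have thq : th ^+ q = 1 - th by rewrite -Tth addrK.
  rewrite frobD // exprMn KT thq.
  apply: (char2_by _ ch _ _ (x ^+ q - (x ^+ q + x) * th)); ring.
have := subset_leq_card sub; rewrite cardsX card_imset // cardsT cardF mulnn.
by rewrite leq_exp2r.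
Qed.

Lemma nzpoly (e : nat -> F) j : (j < m)%N -> e j != 0 ->
  exists2 z, inK z & \sum_(i < m) e i * z ^+ (2 ^ i) != 0.
Proof.
move=> jm ej.
pose pp : {poly F} := \sum_(i < m) e i *: 'X^(2 ^ i).
have hev z : pp.[z] = \sum_(i < m) e i * z ^+ (2 ^ i).
  by rewrite /pp horner_sum; apply: eq_bigr => i _; rewrite hornerZ hornerXn.
have pp0 : pp != 0.
  apply/negP => /eqP h.
  have : pp`_(2 ^ j) = e j.
    rewrite /pp coef_sum (bigD1 (Ordinal jm)) //= coefZ coefXn eqxx mulr1.
    rewrite big1 ?addr0 // => i ij.
    rewrite coefZ coefXn (_ : (2 ^ j == 2 ^ i)%N = false) ?mulr0 //.
    by rewrite eqn_exp2l // eq_sym; apply/negbTE; exact: ij.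
  by rewrite h coef0 => /esym/eqP; rewrite (negbTE ej).
have szp : (size pp <= q)%N.
  rewrite /pp; apply: leq_trans (size_sum _ _ _) _; apply/bigmax_leqP => i _.
  apply: leq_trans (size_scale_leq _ _) _.
  by rewrite size_polyXn ltn_exp2l.
case: (pickP (fun z => (z ^+ q == z) && (\sum_(i < m) e i * z ^+ (2 ^ i) != 0)))
  => [z /andP[/eqP zk nz] | none]; first by exists z.
exfalso.
have allr : all (root pp) (enum KS).
  apply/allP => z; rewrite mem_enum inE => zk.
  have := none z; rewrite zk /= => /negbFE/eqP h.
  by rewrite /root hev h.
have := max_poly_roots pp0 allr (enum_uniq _); rewrite -cardE => lt.
have := leq_trans lt szp.
by rewrite ltnNge Kcard.
Qed.

Lemma no_kernel (e : nat -> F) j : (j < m)%N -> e j != 0 -> (forall i, inK (e i)) ->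
  (forall z, inK z -> fl _ Cc Dd (\sum_(i < m) e i * z ^+ (2 ^ i)) = 0) -> False.
Proof.
move=> jm ej eK h; have [z zk nz] := nzpoly e j jm ej.
have sK : inK (\sum_(i < m) e i * z ^+ (2 ^ i)).
  by apply: Ksum => i; apply: KM; [exact: eK | exact: KX].
by move: nz; rewrite (fl_inj0 _ sK (h z zk)) eqxx.
Qed.

Definition coef (i : nat) := Dd ^+ (2 ^ i) * Sprev Cc Dd (m.-1 - i) ^+ (2 ^ i.+1)
                             + Dd * Dd ^- (2 ^ i) * S_ Cc Dd i.
Definition Mfun (w : F) := \sum_(i < m) coef i * w ^+ (2 ^ i).

Lemma sK k : inK (S_ Cc Dd k) /\ inK (Sprev Cc Dd k).
Proof.
elim: k => [|k [h1 h2]]; first by split; [exact: K1 | exact: K0].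
rewrite pS sS; split=> //; apply: KD; apply: KM => //; apply: KX; [exact: CK | exact: DK].
Qed.

Lemma coefK i : inK (coef i).
Proof.
rewrite /coef; apply: KD; apply: KM.
- apply: KX; exact: DK.
- apply: KX; exact: (sK _).2.
- apply: KM; [exact: DK | apply: KV; apply: KX; exact: DK].
- exact: (sK _).1.
Qed.

Lemma MK w : inK w -> inK (Mfun w).
Proof. by move=> hw; apply: Ksum => i; apply: KM; [exact: coefK | exact: KX]. Qed.

Lemma idem1 (x : F) : x != 0 -> x ^+ 2 = x -> x = 1.
Proof. by move=> x0 h; apply: (mulfI x0); rewrite mulr1 -expr2 h. Qed.

Lemma key u : inK u -> Mfun (Lfun u) = u.
Proof.
move=> hu.
case: (ltnP 1 m) => [m2 | m1].
  have main z : inK z -> fl _ Cc Dd (Mfun z) = Dd * Nn _ Cc Dd m * z.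
    by move=> hz; rewrite /Mfun /coef; exact: (main_id _ ch _ _ _ m2 CK DK D0 z hz).
  case: (Nn01 _ ch _ _ _ m2 CK DK D0) => hN; last first.
    have Lm z : inK z -> Lfun (Mfun z) = z.
      move=> hz; rewrite Lfl main // hN /Dd; field; exact: A0.
    apply: Linj => //; first exact: (MK _ (LK _ hu)).
    by rewrite Lm //; exact: LK.
  exfalso.
  case: (boolP [exists i : 'I_m, coef i != 0]).
    move/existsP => [i ci]; apply: (no_kernel coef i) => //.
    - exact: coefK.
    - by move=> z hz; rewrite main // hN mulr0 mul0r.
  move=> /existsPn hall.
  have c0 : coef 0 = 0 by have := hall (Ordinal m0); rewrite negbK => /eqP.
  have ml : (m.-1 < m)%N by lia.
  have cl : coef m.-1 = 0 by have := hall (Ordinal ml); rewrite negbK => /eqP.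
  have hp : Dd * Sprev Cc Dd m.-1 ^+ 2 = 1.
    move: c0; rewrite /coef subn0 expn0 expn1 !expr1 (s0 _ Cc Dd) mulr1 mulfV; last exact: D0.
    by move/eqP; rewrite addr_eq0 opp2 // => /eqP.
  have hs : S_ Cc Dd m.-1 = 0.
    move: cl; rewrite /coef subnn (p0 _ Cc Dd) e0 // mulr0 add0r => /eqP.
    rewrite mulf_eq0 => /orP[|/eqP //].
    by rewrite mulf_eq0 !invr_eq0 expf_eq0 (negbTE A0) (negbTE D0) andbF.
  have hsm : S_ Cc Dd m = 1.
    move: hN; rewrite /Nn hp => /eqP; rewrite addr_eq0 opp2 // => /eqP.
    by [].
  apply: (no_kernel (fun i => gY _ Cc Dd i.+1) 0) => //=.
  - rewrite expn0 expr1 (s0 _ Cc Dd) mulr1 mulfV ?oner_neq0 //; exact: D0.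
  - move=> i; apply: KM; last exact: (sK _).1.
    apply: KM; [exact: DK | apply: KV; apply: KX; exact: DK].
  - move=> z hz.
    rewrite (fl_sum _ ch Cc Dd (gY _ Cc Dd) z m) (PhiY0 _ _ _ D0)
            (PhiYm _ ch _ _ _ m2 DK D0 z hz) hsm hs big1.
      rewrite expr0n /=; ring.
    by move=> i _; rewrite (epsY _ ch _ _ D0) mul0r.
have hm : m = 1%N by lia.
have hq : q = 2%N by rewrite hm.
have C1 : Cc = 1.
  apply: idem1; first by rewrite expf_neq0 // t0.
  by have := CK; rewrite /inK hq.
have D1 : Dd = 1.
  apply: idem1; first exact: D0.
  by have := DK; rewrite /inK hq.
have A1 : Aa = 1 by rewrite -[Aa]invrK -/Dd D1 invr1.
have u2 : u ^+ 2 = u by have := hu; rewrite /inK hq.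
rewrite /Mfun /coef hm big_ord1 /= D1 C1 /Lfun A1 C1.
rewrite (_ : u ^+ 4 = u); last by rewrite (_ : 4 = 2 * 2)%N // exprM u2 u2.
rewrite u2 expr1n !mul1r expr1 invr1 mulr1.
by rewrite subnn (p0 _ 1 1) expr0n /= add0r mul1r add2 // add0r.
Qed.
End FF.

Theorem theorem3p14 (m : nat) (F : finFieldType) (b delta : F) :
  (0 < m)%N ->
  #|F| = ((2 ^ m) ^ 2)%N ->
  b ^+ (2 ^ m) = b -> b != 0 ->
  delta ^+ (2 ^ m) != delta ->
  let q := (2 ^ m)%N in
  let A := b * (trq q delta) ^+ 2 in
  let B := b * delta ^+ (6 * q) + b * delta ^+ 6 in
  let C := (trq q delta) ^+ 2 in
  let D := A^-1 in
  let P := fun x : F => b * (x ^+ q + x + delta) ^+ 6 + x in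
  let Pinv := fun x : F =>
    x + b * (delta + \sum_(i < m)
              (D ^+ (2 ^ i) * (Sprev C D (m.-1 - i)) ^+ (2 ^ i.+1)
               + D * D ^- (2 ^ i) * S_ C D i) * (x ^+ q + x + B) ^+ (2 ^ i)) ^+ 6 in
  injective P ->
  (forall c : F, P (Pinv c) = c) /\ (forall c : F, Pinv (P c) = c).
Proof.
move=> m0 cardF bq b0 dq q A B C D P Pinv Pinj.
have ch := ch2F F m cardF.
have key' := key F m b delta m0 cardF bq b0 dq Pinj.
have inv2 : forall c, Pinv (P c) = c.
  move=> c.
  have hu : inK F m (c ^+ q + c) := KT F m cardF c.
  have HT : (P c) ^+ q + P c + B = Lfun F m b delta (c ^+ q + c).
    rewrite /P frobD //.
    set u := c ^+ q + c; set y := b * (u + delta) ^+ 6.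
    have -> : y ^+ q + c ^+ q + (y + c) + B = (y ^+ q + y) + u + B by rewrite /u; ring.
    rewrite /y (TB F m b delta cardF bq _ hu) /Lfun.
    apply: (char2_by _ ch _ _ (Bb F m b delta)); rewrite /Bb /Aa /Cc /t /B /A /C /trq /u /q; ring.
  rewrite /Pinv HT.
  have := key' _ hu; rewrite /Mfun /coef => ->.
  rewrite /P addrC; apply: (char2_by _ ch _ _ (b * (c ^+ q + c + delta) ^+ 6)); ring.
split=> // c.
have /codomP [x ->] := injF_onto Pinj c.
by rewrite inv2.
Qed.
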